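(* The line bundle $\mathcal{L}$ on $\mathbb{W}$ is ample in Mumford's sense: the nonvanishing loci $\{p\in\mathbb{W}: s(p)\neq 0\}$ of global sections $s$ of $\mathcal{L}^n$, for $n\geq 1$, form a basis of the Zariski topology of $\mathbb{W}$.
   Context: $\mathbb{W}$ is the ind-scheme over $\mathbb{Z}$ obtained by gluing infinitely many affine planes $\mathbb{A}^2_n=\mathsf{Spec}\,\mathbb{Z}[x_n,y_n]$, $n\in\mathbb{Z}$, where $\mathbb{A}^2_n\setminus\{x_n=0\}$ is identified with $\mathbb{A}^2_{n+1}\setminus\{y_{n+1}=0\}$ via $y_{n+1}=x_n^{-1}$ and $x_ny_n=x_{n+1}y_{n+1}$. $\mathcal{L}$ is the line bundle on $\mathbb{W}$ obtained by gluing the trivial line bundles on the charts $\mathbb{A}^2_n$ using the transition function $x_n$ on the overlap $\mathbb{A}^2_n\cap\mathbb{A}^2_{n+1}$. *)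

(* Defs.v *)
From HB Require Import structures.
From mathcomp Require Import all_boot all_order all_algebra.
From mathcomp Require Import mpoly.
Set Implicit Arguments. Unset Strict Implicit. Unset Printing Implicit Defensive.
Import Order.TTheory GRing.Theory Num.Theory.
Local Open Scope ring_scope.

(* Coordinate ring of each chart A^2_k = Spec Z[x_k, y_k]. *)
Notation R2 := {mpoly int[2]}.
(* Auxiliary ring Z[a,b,c]; modulo (a c - 1) it is Z[x_k, x_k^-1, y_k],
   the coordinate ring of the overlap A^2_k \ {x_k = 0}. *)
Notation R3 := {mpoly int[3]}.

Definition X2 : R2 := 'X_(@Ordinal 2 0 isT).
Definition Y2 : R2 := 'X_(@Ordinal 2 1 isT).
Definition A3 : R3 := 'X_(@Ordinal 3 0 isT).
Definition B3 : R3 := 'X_(@Ordinal 3 1 isT).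
Definition C3 : R3 := 'X_(@Ordinal 3 2 isT).

Definition alpha (p : R2) : R3 := comp_mpoly [tuple A3; B3] p.
(* beta : Z[x_{k+1},y_{k+1}] -> Z[a,b,c], x_{k+1} |-> a^2 b, y_{k+1} |-> c,
   i.e. (mod ac-1) y_{k+1} = x_k^{-1}, x_{k+1} = x_k y_k / y_{k+1}. *)
Definition beta (p : R2) : R3 := comp_mpoly [tuple A3 ^+ 2 * B3; C3] p.

Definition in_overlap_ideal (q : R3) : Prop := exists h : R3, q = h * (A3 * C3 - 1).

Definition is_prime_ideal (T : comRingType) (P : T -> Prop) : Prop :=
  [/\ P 0, (forall a b, P a -> P b -> P (a + b)),
      (forall a b, P b -> P (a * b)), ~ P 1 &
      (forall a b, P (a * b) -> P a \/ P b)].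

(* Points of W: pairs (k, P), P a prime of Z[x_k,y_k], modulo the gluing.
   glued k P Q : the point P of A^2_k (with x_k notin P) is identified with
   the point Q of A^2_{k+1} (with y_{k+1} notin Q): both come from one prime
   of the common localization Z[a,b,c]/(ac-1) = Z[x_k,y_k][x_k^-1]. *)
Definition glued (P Q : R2 -> Prop) : Prop :=
  exists p3 : R3 -> Prop, [/\ is_prime_ideal p3, p3 (A3 * C3 - 1),
     (forall f, P f <-> p3 (alpha f)) & (forall g, Q g <-> p3 (beta g))].


Definition W_open (U : int -> (R2 -> Prop) -> Prop) : Prop :=
  (forall k P Q, is_prime_ideal P -> is_prime_ideal Q -> glued P Q ->
      (U k P <-> U (k + 1) Q)) /\
  (forall k, exists S : R2 -> Prop, forall P, is_prime_ideal P ->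
      (U k P <-> exists g, S g /\ ~ P g)).

(* Global sections of L^n: s_k in Z[x_k,y_k] for every chart, with
   s_k = x_k^n * s_{k+1} on the overlap (transition function x_k of L). *)
Definition section_Ln (n : nat) (s : int -> R2) : Prop :=
  forall k : int, in_overlap_ideal (alpha (s k) - A3 ^+ n * beta (s (k + 1))).

Definition nonvanishing (s : int -> R2) : int -> (R2 -> Prop) -> Prop :=
  fun k P => ~ P (s k).

(* Main.v *)
Require Import Defs.
From HB Require Import structures.
From mathcomp Require Import all_boot all_order all_algebra.
From mathcomp Require Import mpoly.
From mathcomp Require Import ring lra zify.
Import Order.TTheory GRing.Theory Num.Theory.
Local Open Scope ring_scope.

Section PrimeFacts.
Context {T : comRingType} {P : T -> Prop} (hP : is_prime_ideal P).

Lemma ip0 : P 0. Proof. by case: hP. Qed.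
Lemma ipD a b : P a -> P b -> P (a + b). Proof. by case: hP => _ H _ _ _; apply: H. Qed.
Lemma ipMl a b : P b -> P (a * b). Proof. by case: hP => _ _ H _ _; apply: H. Qed.
Lemma ipMr a b : P a -> P (a * b). Proof. by move=> Ha; rewrite mulrC; apply: ipMl. Qed.
Lemma ip1 : ~ P 1. Proof. by case: hP. Qed.
Lemma ipP a b : P (a * b) -> P a \/ P b. Proof. by case: hP => _ _ _ _ H; apply: H. Qed.
Lemma ipN a : P a -> P (- a).
Proof. by move=> Ha; rewrite -mulN1r; apply: ipMl. Qed.
Lemma ipB a b : P a -> P b -> P (a - b).
Proof. by move=> Ha Hb; apply: ipD => //; apply: ipN. Qed.
Lemma ipX x n : P (x ^+ n) -> P x.
Proof.
elim: n => [|n IH]; first by rewrite expr0 => /ip1.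
by rewrite exprS => /ipP [] // /IH.
Qed.
Lemma ip_sum (I : Type) (r : seq I) (Q : pred I) (f : I -> T) :
  (forall i, Q i -> P (f i)) -> P (\sum_(i <- r | Q i) f i).
Proof. by move=> H; apply: big_ind => //; [apply: ip0 | apply: ipD]. Qed.
End PrimeFacts.

Lemma prime_preim (T1 T2 : comRingType) (f : {rmorphism T1 -> T2}) (P : T2 -> Prop) :
  is_prime_ideal P -> is_prime_ideal (fun x => P (f x)).
Proof.
move=> hP; split.
- by rewrite rmorph0; apply: ip0.
- by move=> a b Ha Hb; rewrite rmorphD; apply: ipD.
- by move=> a b Hb; rewrite rmorphM; apply: ipMl.
- by rewrite rmorph1; apply: ip1.
- by move=> a b; rewrite rmorphM; apply: ipP.
Qed.

Lemma mpoly_gen_ind (n : nat) (Q : {mpoly int[n]} -> Prop) :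
  (forall c : int, Q c%:MP) -> (forall i, Q 'X_i) ->
  (forall p q, Q p -> Q q -> Q (p + q)) -> (forall p q, Q p -> Q q -> Q (p * q)) ->
  forall p, Q p.
Proof.
move=> HC HX HD HM p; rewrite (mpolyE p).
have Q0 : Q 0 by rewrite -mpolyC0.
have Q1 : Q 1 by rewrite -mpolyC1.
apply: big_ind => // m _.
rewrite -mul_mpolyC; apply: (HM) => //.
rewrite mpolyXE_id; apply: big_ind => // i _.
by elim: (m i) => [|k IH]; rewrite ?expr0 // exprS; apply: (HM).
Qed.

Lemma rmorph_ext (n : nat) (S : comRingType) (f g : {rmorphism {mpoly int[n]} -> S}) :
  (forall i, f 'X_i = g 'X_i) -> forall p, f p = g p.
Proof.
move=> H; apply: mpoly_gen_ind => //.
- move=> c. have := rmorph_int (@mpolyC n int) c.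
  rewrite intz => /= ->. by rewrite !rmorph_int.
- by move=> p q Hp Hq; rewrite !rmorphD Hp Hq.
- by move=> p q Hp Hq; rewrite !rmorphM Hp Hq.
Qed.

Notation F := {fraction R2}.
Definition tf : {rmorphism R2 -> F} := @FracField.tofrac _.

Lemma tf_inj p q : tf p = tf q -> p = q.
Proof. by move=> /eqP; rewrite /tf tofrac_eq => /eqP. Qed.

Lemma X_neq0 (n : nat) (i : 'I_n) : ('X_i : {mpoly int[n]}) != 0.
Proof. by rewrite -msize_poly_eq0 msizeX. Qed.

Lemma tfX2 : tf X2 != 0. Proof. by rewrite /tf tofrac_eq0 X_neq0. Qed.
Lemma tfY2 : tf Y2 != 0. Proof. by rewrite /tf tofrac_eq0 X_neq0. Qed.

Definition h1 (i : 'I_3) : F := [:: tf X2; tf Y2; (tf X2)^-1]`_i.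
Definition psi1 : {rmorphism R3 -> F} := mmap (intmul (1:F)) h1.
Definition h2 (i : 'I_3) : F := [:: (tf Y2)^-1; tf X2 * tf Y2 ^+ 2; tf Y2]`_i.
Definition psi2 : {rmorphism R3 -> F} := mmap (intmul (1:F)) h2.

Lemma mmap_Xi (h : 'I_3 -> F) i : mmap (intmul (1:F)) h 'X_i = h i.
Proof. by rewrite mmapX mmap1U. Qed.

Lemma psi1A : psi1 A3 = tf X2. Proof. exact: mmap_Xi. Qed.
Lemma psi1B : psi1 B3 = tf Y2. Proof. exact: mmap_Xi. Qed.
Lemma psi1C : psi1 C3 = (tf X2)^-1. Proof. exact: mmap_Xi. Qed.
Lemma psi2A : psi2 A3 = (tf Y2)^-1. Proof. exact: mmap_Xi. Qed.
Lemma psi2B : psi2 B3 = tf X2 * tf Y2 ^+ 2. Proof. exact: mmap_Xi. Qed.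
Lemma psi2C : psi2 C3 = tf Y2. Proof. exact: mmap_Xi. Qed.

Lemma alphaX : alpha X2 = A3. Proof. by rewrite /alpha /X2 comp_mpolyXU. Qed.
Lemma alphaY : alpha Y2 = B3. Proof. by rewrite /alpha /Y2 comp_mpolyXU. Qed.
Lemma betaX : beta X2 = A3 ^+ 2 * B3. Proof. by rewrite /beta /X2 comp_mpolyXU. Qed.
Lemma betaY : beta Y2 = C3. Proof. by rewrite /beta /Y2 comp_mpolyXU. Qed.

Lemma ord2_cases (i : 'I_2) : i = @Ordinal 2 0 isT \/ i = @Ordinal 2 1 isT.
Proof. case: i => [[|[|m]] Hm] //; [left|right]; exact: val_inj. Qed.

Lemma ord3_cases (i : 'I_3) :
  [\/ i = @Ordinal 3 0 isT, i = @Ordinal 3 1 isT | i = @Ordinal 3 2 isT].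
Proof. case: i => [[|[|[|m]]] Hm] //; [apply: Or31|apply: Or32|apply: Or33]; exact: val_inj. Qed.

Lemma psi1_alpha f : psi1 (alpha f) = tf f.
Proof.
apply: (@rmorph_ext _ _ (psi1 \o alpha) tf) => i /=.
case: (ord2_cases i) => ->.
- by change (psi1 (alpha X2) = tf X2); rewrite alphaX psi1A.
- by change (psi1 (alpha Y2) = tf Y2); rewrite alphaY psi1B.
Qed.

Lemma psi2_beta f : psi2 (beta f) = tf f.
Proof.
apply: (@rmorph_ext _ _ (psi2 \o beta) tf) => i /=.
case: (ord2_cases i) => ->.
- change (psi2 (beta X2) = tf X2); rewrite betaX rmorphM rmorphXn psi2A psi2B /=.
  by rewrite mulrCA -exprMn mulVf ?tfY2 // expr1n mulr1.
- by change (psi2 (beta Y2) = tf Y2); rewrite betaY psi2C.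
Qed.

Lemma psi1_ov : psi1 (A3 * C3 - 1) = 0.
Proof. by rewrite rmorphB rmorphM rmorph1 psi1A psi1C mulfV ?tfX2 // subrr. Qed.

Lemma psi2_ov : psi2 (A3 * C3 - 1) = 0.
Proof. by rewrite rmorphB rmorphM rmorph1 psi2A psi2C mulVf ?tfY2 // subrr. Qed.

Definition locp (psi : R3 -> F) (z : R2) :=
  forall q, exists K g, psi q * tf z ^+ K = tf g.

Lemma locp_ind (psi : {rmorphism R3 -> F}) (z : R2) :
  (forall i, exists K g, psi 'X_i * tf z ^+ K = tf g) -> locp psi z.
Proof.
move=> HX; apply: mpoly_gen_ind => //.
- move=> c; exists 0%N, c%:MP; rewrite expr0 mulr1.
  have E3 := rmorph_int (@mpolyC 3 int) c; have E2 := rmorph_int (@mpolyC 2 int) c.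
  rewrite intz in E3 E2; rewrite E3 E2 rmorph_int.
  by rewrite /tf rmorph_int.
- move=> p q [K [g Hg]] [L [h Hh]]; exists (K + L)%N, (g * z ^+ L + h * z ^+ K).
  rewrite rmorphD mulrDl exprD rmorphD !rmorphM !rmorphXn -Hg -Hh.
  ring.
- move=> p q [K [g Hg]] [L [h Hh]]; exists (K + L)%N, (g * h).
  rewrite rmorphM exprD rmorphM -Hg -Hh.
  ring.
Qed.

Lemma loc1 : locp psi1 X2.
Proof.
apply: locp_ind => i; case: (ord3_cases i) => ->.
- by exists 0%N, X2; rewrite mulr1 -/A3 psi1A.
- by exists 0%N, Y2; rewrite mulr1 -/B3 psi1B.
- by exists 1%N, 1; rewrite -/C3 psi1C expr1 mulVf ?tfX2 // /tf rmorph1.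
Qed.

Lemma loc2 : locp psi2 Y2.
Proof.
apply: locp_ind => i; case: (ord3_cases i) => ->.
- by exists 1%N, 1; rewrite -/A3 psi2A expr1 mulVf ?tfY2 // /tf rmorph1.
- by exists 0%N, (X2 * Y2 ^+ 2); rewrite mulr1 -/B3 psi2B /tf rmorphM rmorphXn.
- by exists 0%N, Y2; rewrite mulr1 -/C3 psi2C.
Qed.

Lemma ipXn (P : R2 -> Prop) z n : is_prime_ideal P -> ~ P z -> ~ P (z ^+ n).
Proof. by move=> hP hz /(ipX hP). Qed.

Lemma build_p3 (psi : {rmorphism R3 -> F}) (z : R2) (P : R2 -> Prop) (gam : R2 -> R3) :
  is_prime_ideal P -> ~ P z -> psi (A3 * C3 - 1) = 0 ->
  (forall f, psi (gam f) = tf f) -> locp psi z ->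
  exists p3 : R3 -> Prop,
    [/\ is_prime_ideal p3, p3 (A3 * C3 - 1) & forall f, P f <-> p3 (gam f)].
Proof.
move=> hP hz hov hgam hloc.
exists (fun q => exists N f, P f /\ psi q * tf z ^+ N = tf f).
split.
- split.
  + by exists 0%N, 0; rewrite rmorph0 mul0r rmorph0; split => //; apply: ip0.
  + move=> a b [N [f [Pf Ef]]] [M [g [Pg Eg]]].
    exists (N + M)%N, (f * z ^+ M + g * z ^+ N); split.
      by apply: ipD => //; apply: ipMr.
    rewrite rmorphD mulrDl exprD rmorphD !rmorphM !rmorphXn -Ef -Eg; ring.
  + move=> a b [N [f [Pf Ef]]].
    have [K [g Eg]] := hloc a.
    exists (N + K)%N, (g * f); split; first by apply: ipMl.
    rewrite rmorphM exprD rmorphM -Ef -Eg; ring.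
  + move=> [N [f [Pf Ef]]].
    rewrite rmorph1 mul1r -rmorphXn in Ef.
    by move/tf_inj: Ef => Ef; apply: (@ipXn _ _ N hP hz); rewrite Ef.
  + move=> a b [N [f [Pf Ef]]].
    have [K [g Eg]] := hloc a; have [L [h Eh]] := hloc b.
    have E : g * h * z ^+ N = f * z ^+ (K + L).
      apply: tf_inj; rewrite !rmorphM !rmorphXn -Eg -Eh exprD.
      rewrite -Ef rmorphM; ring.
    have : P (g * h * z ^+ N) by rewrite E; apply: ipMr.
    case/(ipP hP) => [/(ipP hP) [Pg|Ph]|/(@ipXn _ _ N hP hz)] //.
    * by left; exists K, g.
    * by right; exists L, h.
- by exists 0%N, 0; rewrite hov mul0r rmorph0; split => //; apply: ip0.
- move=> f; split.
  + by move=> Pf; exists 0%N, f; rewrite hgam expr0 mulr1.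
  + move=> [N [f' [Pf' Ef]]].
    rewrite hgam -rmorphXn -rmorphM in Ef; move/tf_inj: Ef => Ef.
    by move: Pf'; rewrite -Ef => /(ipP hP) [] // /(@ipXn _ _ N hP hz).
Qed.

Lemma glue_up (P : R2 -> Prop) : is_prime_ideal P -> ~ P X2 ->
  exists Q, is_prime_ideal Q /\ glued P Q.
Proof.
move=> hP hX.
have [p3 [hp3 hov hal]] := @build_p3 psi1 X2 P alpha hP hX psi1_ov psi1_alpha loc1.
exists (fun g => p3 (beta g)); split; first exact: (@prime_preim _ _ beta _ hp3).
by exists p3; split.
Qed.

Lemma glue_down (Q : R2 -> Prop) : is_prime_ideal Q -> ~ Q Y2 ->
  exists P, is_prime_ideal P /\ glued P Q.
Proof.
move=> hQ hY.
have [p3 [hp3 hov hbe]] := @build_p3 psi2 Y2 Q beta hQ hY psi2_ov psi2_beta loc2.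
exists (fun g => p3 (alpha g)); split; first exact: (@prime_preim _ _ alpha _ hp3).
by exists p3; split.
Qed.

Lemma sat_gen (T : comRingType) (p3 : T -> Prop) (a c x y : T) (n : nat) :
  is_prime_ideal p3 -> p3 (a * c - 1) -> p3 (x - a ^+ n * y) -> (p3 x <-> p3 y).
Proof.
move=> hp3 hov hd.
have hA : ~ p3 a.
  move=> hA; apply: (ip1 hp3).
  have -> : (1 : T) = a * c - (a * c - 1) by ring.
  by apply: (ipB hp3) => //; apply: (ipMr hp3).
split => H.
- have : p3 (a ^+ n * y).
    have -> : a ^+ n * y = x - (x - a ^+ n * y) by ring.
    exact: (ipB hp3).
  by case/(ipP hp3) => // /(ipX hp3).
- have -> : x = (x - a ^+ n * y) + a ^+ n * y by ring.
  by apply: (ipD hp3) => //; apply: (ipMl hp3).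
Qed.

Lemma sec_sat n s : section_Ln n s -> forall k P Q,
  glued P Q -> (~ P (s k) <-> ~ Q (s (k + 1))).
Proof.
move=> hs k P Q [p3 [hp3 hov hPa hQb]].
have [h Eh] := hs k.
have hd : p3 (alpha (s k) - A3 ^+ n * beta (s (k + 1))).
  by rewrite Eh; apply: (ipMl hp3).
have E := @sat_gen _ _ _ _ _ _ _ hp3 hov hd.
split => H1 H2; apply: H1.
- by apply/hPa/E/hQb.
- by apply/hQb/E/hPa.
Qed.

Lemma part1 n s : section_Ln n s -> W_open (nonvanishing s).
Proof.
move=> hs; split.
- by move=> k P Q _ _ hg; exact: (@sec_sat _ _ hs k P Q hg).
- move=> k; exists (fun g => g = s k) => P _; rewrite /nonvanishing; split.
  + by move=> H; exists (s k).
  + by move=> [g [-> H]].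
Qed.

Definition Ez (N : nat) (d : int) (p q : nat) : int :=
  N%:Z * (d * (d + 1)) - p%:Z * d + q%:Z * (d + 1).

Lemma Ez_ge0 N d p q : (p < N)%N -> (q < N)%N -> 0 <= Ez N d p q.
Proof.
rewrite /Ez => hp hq.
have [hd|hd] := leP 0 d.
- have h1 : 0 <= d * (N%:Z * (d + 1) - p%:Z) by apply: mulr_ge0; lia.
  have h2 : 0 <= q%:Z * (d + 1) by apply: mulr_ge0; lia.
  nia.
- have h0 : N%:Z <= N%:Z * (- d).
    by rewrite -{1}[N%:Z]mulr1; apply: ler_wpM2l; lia.
  have h1 : 0 <= (- d - 1) * (N%:Z * (- d) - q%:Z) by apply: mulr_ge0; lia.
  have h2 : 0 <= p%:Z * (- d) by apply: mulr_ge0; lia.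
  nia.
Qed.

Lemma Ez_gt0 N d p q : (p < N)%N -> (q < N)%N -> (1 <= d) || (d <= -2) -> 1 <= Ez N d p q.
Proof.
rewrite /Ez => hp hq /orP [] hd.
- have h1 : 1 <= d * (N%:Z * (d + 1) - p%:Z) by rewrite -[1]mul1r; apply: ler_pM; lia.
  have h2 : 0 <= q%:Z * (d + 1) by apply: mulr_ge0; lia.
  nia.
- have h0 : N%:Z <= N%:Z * (- d).
    by rewrite -{1}[N%:Z]mulr1; apply: ler_wpM2l; lia.
  have h1 : 1 <= (- d - 1) * (N%:Z * (- d) - q%:Z) by rewrite -[1]mul1r; apply: ler_pM; lia.
  have h2 : 0 <= p%:Z * (- d) by apply: mulr_ge0; lia.
  nia.
Qed.

Lemma Ez_rec N d p q : Ez N (d - 1) p q + Ez N (d + 1) p q = (N + N)%:Z + Ez N d p q + Ez N d p q.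
Proof. rewrite /Ez PoszD; ring. Qed.

Lemma Ez_m1 N p q : Ez N (-1) p q = p. Proof. rewrite /Ez; ring. Qed.
Lemma Ez_0 N p q : Ez N 0 p q = q. Proof. rewrite /Ez; ring. Qed.

Definition i0 : 'I_2 := @Ordinal 2 0 isT.
Definition i1 : 'I_2 := @Ordinal 2 1 isT.

Lemma monoX (m : 'X_{1..2}) : 'X_[m] = X2 ^+ m i0 * Y2 ^+ m i1 :> R2.
Proof.
rewrite mpolyXE_id big_ord_recl big_ord_recl big_ord0 mulr1.
have -> : (lift ord0 (ord0 : 'I_1) : 'I_2) = i1 by apply: val_inj.
by have -> : (ord0 : 'I_2) = i0 by apply: val_inj.
Qed.

Lemma bnd (g : R2) m : m \in msupp g -> (m i0 < (msize g).+1)%N /\ (m i1 < (msize g).+1)%N.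
Proof.
move=> /msize_mdeg_lt hm; rewrite mdegE in hm.
rewrite big_ord_recl big_ord_recl big_ord0 addn0 in hm.
have e0 : (ord0 : 'I_2) = i0 by apply: val_inj.
have e1 : (lift ord0 (ord0 : 'I_1) : 'I_2) = i1 by apply: val_inj.
rewrite e1 e0 in hm; split; lia.
Qed.

Definition ee N d p q : nat := `|Ez N d p q|%N.

Lemma ee_int N d p q : 0 <= Ez N d p q -> (ee N d p q)%:Z = Ez N d p q.
Proof. by move=> h; rewrite /ee gez0_abs. Qed.

Definition mono N (d : int) (m : 'X_{1..2}) : R2 :=
  X2 ^+ ee N (d - 1) (m i0) (m i1) * Y2 ^+ ee N d (m i0) (m i1).

Definition sec (g : R2) (k j : int) : R2 :=
  \sum_(m <- msupp g) (g@_m)%:MP * mono (msize g).+1 (j - k) m.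

Lemma sec_k g k : sec g k k = g.
Proof.
rewrite [RHS]mpolyE /sec; apply: eq_bigr => m _; rewrite -mul_mpolyC; congr (_ * _).
rewrite monoX /mono subrr sub0r /ee Ez_m1 Ez_0 //.
Qed.

Lemma term_gen (T : comRingType) (a b c : T) (e1 e2 e3 n : nat) :
  (e1 + e3 = n + 2 * e2)%N ->
  exists h, a ^+ e1 * b ^+ e2 - a ^+ n * ((a ^+ 2 * b) ^+ e2 * c ^+ e3) = h * (a * c - 1).
Proof.
move=> he.
have E1 : a ^+ n * (a ^+ 2) ^+ e2 = a ^+ e1 * a ^+ e3.
  by rewrite -exprM -!exprD; congr (_ ^+ _); lia.
have H : a ^+ e3 * c ^+ e3 = 1 + (a * c - 1) * \sum_(i < e3) (a * c) ^+ i.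
  by rewrite -subrX1 exprMn; ring.
exists (- (a ^+ e1 * b ^+ e2 * \sum_(i < e3) (a * c) ^+ i)).
rewrite exprMn.
have -> : a ^+ n * ((a ^+ 2) ^+ e2 * b ^+ e2 * c ^+ e3) =
   (a ^+ n * (a ^+ 2) ^+ e2) * b ^+ e2 * c ^+ e3 by ring.
rewrite E1.
have -> : a ^+ e1 * a ^+ e3 * b ^+ e2 * c ^+ e3 = a ^+ e1 * b ^+ e2 * (a ^+ e3 * c ^+ e3) by ring.
rewrite H; ring.
Qed.

Lemma ov0 : in_overlap_ideal 0. Proof. by exists 0; rewrite mul0r. Qed.
Lemma ovD a b : in_overlap_ideal a -> in_overlap_ideal b -> in_overlap_ideal (a + b).
Proof. by move=> [h ->] [h' ->]; exists (h + h'); rewrite mulrDl. Qed.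
Lemma ovZ (c : int) a : in_overlap_ideal a -> in_overlap_ideal (c *: a).
Proof. by move=> [h ->]; exists (c *: h); rewrite scalerAl. Qed.
Lemma ov_sum (I : Type) (r : seq I) (Q : pred I) (f : I -> R3) :
  (forall i, Q i -> in_overlap_ideal (f i)) -> in_overlap_ideal (\sum_(i <- r | Q i) f i).
Proof. by move=> H; apply: big_ind => //; [apply: ov0 | apply: ovD]. Qed.

Definition alphaL : {rmorphism R2 -> R3} := alpha.
Definition betaL : {rmorphism R2 -> R3} := beta.
Lemma alphaE p : alpha p = alphaL p. Proof. by []. Qed.
Lemma betaE p : beta p = betaL p. Proof. by []. Qed.
Lemma alphaC (c : int) : alphaL c%:MP = c%:MP.
Proof. exact: comp_mpolyC. Qed.
Lemma betaC (c : int) : betaL c%:MP = c%:MP.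
Proof. exact: comp_mpolyC. Qed.
Lemma ovM x a : in_overlap_ideal a -> in_overlap_ideal (x * a).
Proof. by move=> [h ->]; exists (x * h); rewrite mulrA. Qed.

Lemma alpha_sum (r : seq 'X_{1..2}) (Fm : 'X_{1..2} -> R2) :
  alpha (\sum_(m <- r) Fm m) = \sum_(m <- r) alpha (Fm m).
Proof. rewrite alphaE raddf_sum. by []. Qed.
Lemma beta_sum (r : seq 'X_{1..2}) (Fm : 'X_{1..2} -> R2) :
  beta (\sum_(m <- r) Fm m) = \sum_(m <- r) beta (Fm m).
Proof. rewrite betaE raddf_sum. by []. Qed.

Lemma alphaM (u v : R2) : alpha (u * v) = alpha u * alpha v.
Proof. exact: rmorphM. Qed.
Lemma alphaXn (u : R2) e : alpha (u ^+ e) = alpha u ^+ e.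
Proof. exact: rmorphXn. Qed.
Lemma alphaMC (c : int) (u : R2) : alpha (c%:MP * u) = c%:MP * alpha u.
Proof. by rewrite alphaM /alpha comp_mpolyC. Qed.
Lemma betaM (u v : R2) : beta (u * v) = beta u * beta v.
Proof. exact: rmorphM. Qed.
Lemma betaXn (u : R2) e : beta (u ^+ e) = beta u ^+ e.
Proof. exact: rmorphXn. Qed.
Lemma betaMC (c : int) (u : R2) : beta (c%:MP * u) = c%:MP * beta u.
Proof. by rewrite betaM /beta comp_mpolyC. Qed.

Lemma ov_scale (u v : R2) (c : int) n :
  in_overlap_ideal (alpha u - A3 ^+ n * beta v) ->
  in_overlap_ideal (alpha (c%:MP * u) - A3 ^+ n * beta (c%:MP * v)).
Proof.
move=> H; rewrite alphaMC betaMC mulrCA -mulrBr.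
exact: ovM.
Qed.

Lemma alpha_mono e1 e2 : alpha (X2 ^+ e1 * Y2 ^+ e2) = A3 ^+ e1 * B3 ^+ e2.
Proof. by rewrite alphaM !alphaXn alphaX alphaY. Qed.
Lemma beta_mono e1 e2 : beta (X2 ^+ e1 * Y2 ^+ e2) = (A3 ^+ 2 * B3) ^+ e1 * C3 ^+ e2.
Proof. by rewrite betaM !betaXn betaX betaY. Qed.

Lemma term_ov N (d : int) (c : int) (m : 'X_{1..2}) : (m i0 < N)%N -> (m i1 < N)%N ->
  in_overlap_ideal (alpha (c%:MP * mono N d m) - A3 ^+ (N + N) * beta (c%:MP * mono N (d + 1) m)).
Proof.
move=> hp hq.
apply: (@ov_scale (mono N d m) (mono N (d+1) m) c (N + N)).
rewrite /mono alpha_mono beta_mono.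
have -> : d + 1 - 1 = d by ring.
apply: term_gen.
have := Ez_rec N d (m i0) (m i1).
have := @ee_int _ _ _ _ (@Ez_ge0 N (d - 1) _ _ hp hq).
have := @ee_int _ _ _ _ (@Ez_ge0 N d _ _ hp hq).
have := @ee_int _ _ _ _ (@Ez_ge0 N (d + 1) _ _ hp hq).
move=> h1 h2 h3 h4.
apply/eqP; rewrite -eqz_nat !PoszD h1 h2 h3 h4 addr0 PoszD; apply/eqP; ring.
Qed.

Lemma sec_section g k : section_Ln ((msize g).+1 + (msize g).+1) (sec g k).
Proof.
move=> j.
rewrite /sec alpha_sum beta_sum mulr_sumr -sumrB.
rewrite big_seq_cond; apply: ov_sum => m /andP [hm _].
have -> : j + 1 - k = (j - k) + 1 by ring.
have [hp hq] := @bnd g m hm.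
exact: (@term_ov (msize g).+1 (j - k) (g@_m) m hp hq).
Qed.

Lemma sec_divY g k j (P : R2 -> Prop) : is_prime_ideal P -> 1 <= j - k -> P Y2 -> P (sec g k j).
Proof.
move=> hP hd hY; rewrite /sec big_seq_cond; apply: (ip_sum hP) => m /andP [hm _].
have [hp hq] := @bnd g m hm.
have h1 := @Ez_gt0 (msize g).+1 (j - k) _ _ hp hq.
have h2 := @ee_int _ _ _ _ (@Ez_ge0 (msize g).+1 (j - k) _ _ hp hq).
have he : (0 < ee (msize g).+1 (j - k) (m i0) (m i1))%N.
  by rewrite -ltz_nat h2; apply: h1; rewrite hd.
rewrite /mono; move: he; case: (ee (msize g).+1 (j - k) (m i0) (m i1)) => [|e] // _.
rewrite exprS; apply: (ipMl hP); apply: (ipMl hP); exact: (ipMr hP).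
Qed.

Lemma sec_divX g k j (P : R2 -> Prop) : is_prime_ideal P -> j - k <= -1 -> P X2 -> P (sec g k j).
Proof.
move=> hP hd hX; rewrite /sec big_seq_cond; apply: (ip_sum hP) => m /andP [hm _].
have [hp hq] := @bnd g m hm.
have h1 := @Ez_gt0 (msize g).+1 (j - k - 1) _ _ hp hq.
have h2 := @ee_int _ _ _ _ (@Ez_ge0 (msize g).+1 (j - k - 1) _ _ hp hq).
have he : (0 < ee (msize g).+1 (j - k - 1) (m i0) (m i1))%N.
  rewrite -ltz_nat h2; apply: h1; apply/orP; right; lia.
rewrite /mono; move: he; case: (ee (msize g).+1 (j - k - 1) (m i0) (m i1)) => [|e] // _.
rewrite exprS; apply: (ipMl hP); apply: (ipMr hP); exact: (ipMr hP).
Qed.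

Lemma part2 (U : int -> (R2 -> Prop) -> Prop) : W_open U ->
     forall (k : int) (P : R2 -> Prop), is_prime_ideal P -> U k P ->
     exists (n : nat) (s : int -> R2),
       [/\ (1 <= n)%N, section_Ln n s, nonvanishing s k P &
           forall (k' : int) (P' : R2 -> Prop), is_prime_ideal P' ->
             nonvanishing s k' P' -> U k' P'].
Proof.
move=> [Usat Uloc] k P hP HU.
have [S HS] := Uloc k.
have [g [Sg Pg]] := (HS P hP).1 HU.
exists ((msize g).+1 + (msize g).+1)%N, (sec g k); split.
- by rewrite addSn.
- exact: sec_section.
- by rewrite /nonvanishing sec_k.
have hs := sec_section g k.
have base : forall P', is_prime_ideal P' -> ~ P' (sec g k k) -> U k P'.
  move=> P' hP' H; apply/(HS P' hP'); exists g; split => //.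
  by rewrite sec_k in H.
have up : forall (n : nat) P', is_prime_ideal P' -> ~ P' (sec g k (k + n%:Z)) -> U (k + n%:Z) P'.
  elim=> [|n IH] P' hP' H.
    by rewrite addr0 in H *; apply: base.
  have ej : k + (n.+1)%:Z = (k + n%:Z) + 1 by rewrite -addn1 PoszD addrA.
  rewrite ej in H *.
  have hY : ~ P' Y2.
    move=> hY; apply: H; apply: (@sec_divY g k _ P' hP') => //.
    have -> : k + n%:Z + 1 - k = n%:Z + 1 by ring.
    lia.
  have [Q [hQ hg]] := @glue_down P' hP' hY.
  have HQ : ~ Q (sec g k (k + n%:Z)).
    by apply/(@sec_sat _ _ hs (k + n%:Z) Q P' hg).
  exact/(Usat _ _ _ hQ hP' hg)/IH.
have down : forall (n : nat) P', is_prime_ideal P' -> ~ P' (sec g k (k - n%:Z)) -> U (k - n%:Z) P'.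
  elim=> [|n IH] P' hP' H.
    by rewrite subr0 in H *; apply: base.
  set j := k - (n.+1)%:Z in H *.
  have ej : j + 1 = k - n%:Z by rewrite /j -addn1 PoszD; ring.
  have hX : ~ P' X2.
    move=> hX; apply: H; apply: (@sec_divX g k _ P' hP') => //.
    rewrite /j; lia.
  have [Q [hQ hg]] := @glue_up P' hP' hX.
  have HQ : ~ Q (sec g k (j + 1)).
    by apply/(@sec_sat _ _ hs j P' Q hg).
  rewrite ej in HQ.
  apply/(Usat _ _ _ hP' hQ hg); rewrite ej.
  exact: IH.
move=> k' P' hP' H.
have [e|e] := leP 0 (k' - k).
- have -> : k' = k + `|k' - k|%N%:Z by rewrite gez0_abs //; ring.
  apply: up => //; move: H; rewrite /nonvanishing.
  by have -> : k + `|k' - k|%N%:Z = k' by rewrite gez0_abs //; ring.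
- have -> : k' = k - `|k' - k|%N%:Z by rewrite ltz0_abs //; ring.
  apply: down => //; move: H; rewrite /nonvanishing.
  by have -> : k - `|k' - k|%N%:Z = k' by rewrite ltz0_abs //; ring.
Qed.

Theorem corollary2p5 :
  (forall (n : nat) (s : int -> R2), (1 <= n)%N -> section_Ln n s ->
     W_open (nonvanishing s)) /\
  (forall U : int -> (R2 -> Prop) -> Prop, W_open U ->
     forall (k : int) (P : R2 -> Prop), is_prime_ideal P -> U k P ->
     exists (n : nat) (s : int -> R2),
       [/\ (1 <= n)%N, section_Ln n s, nonvanishing s k P &
           forall (k' : int) (P' : R2 -> Prop), is_prime_ideal P' ->
             nonvanishing s k' P' -> U k' P']).
Proof.
split.
- by move=> n s _ hs; apply: (@part1 n s hs).
- exact: part2.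
Qed.
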